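(* Let $(A,\cdot)$ be a commutative associative algebra and $(A,\circ)$ a Lie-admissible algebra (i.e. $[x,y]=x\circ y-y\circ x$ defines a Lie algebra $(A,[-,-])$) such that for all $x,y,z\in A$: $$2(x\circ y)\cdot z-2(y\circ x)\cdot z=y\cdot(x\circ z)-x\cdot(y\circ z),\qquad 2x\circ(y\cdot z)=(z\cdot x)\circ y+z\cdot(x\circ y).$$ Then $(A,\cdot,[-,-])$ is a transposed Poisson algebra. In particular, if $(A,\cdot,\circ)$ is an anti-pre-Lie Poisson algebra, then $(A,\cdot,[-,-])$ is a transposed Poisson algebra.
   Context: All vector spaces are finite-dimensional over a field $\mathbb F$ of characteristic $0$. A transposed Poisson algebra is $(A,\cdot,[-,-])$ with $(A,\cdot)$ commutative associative, $(A,[-,-])$ a Lie algebra, and $2z\cdot[x,y]=[z\cdot x,y]+[x,z\cdot y]$ for all $x,y,z$. An anti-pre-Lie algebra is $(A,\circ)$ with $x\circ(y\circ z)-y\circ(x\circ z)=[y,x]\circ z$ and $[x,y]\circ z+[y,z]\circ x+[z,x]\circ y=0$; an anti-pre-Lie Poisson algebra is $(A,\cdot,\circ)$ with $(A,\cdot)$ commutative associative, $(A,\circ)$ anti-pre-Lie, satisfying the two displayed identities. *)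

(* Defs.v *)
From HB Require Import structures.
From mathcomp Require Import all_boot all_order all_algebra.
Set Implicit Arguments. Unset Strict Implicit. Unset Printing Implicit Defensive.
Import GRing.Theory.
Local Open Scope ring_scope.

Section Defs.
Variables (F : fieldType) (A : lmodType F).

Definition bilinear_op (op : A -> A -> A) : Prop :=
  (forall (a : F) (x y z : A), op (a *: x + y) z = a *: op x z + op y z) /\
  (forall (a : F) (x y z : A), op x (a *: y + z) = a *: op x y + op x z).

Definition com_assoc_alg (op : A -> A -> A) : Prop :=
  bilinear_op op /\
  (forall x y : A, op x y = op y x) /\
  (forall x y z : A, op (op x y) z = op x (op y z)).

Definition lie_alg (br : A -> A -> A) : Prop :=
  bilinear_op br /\
  (forall x : A, br x x = 0) /\
  (forall x y z : A, br x (br y z) + br y (br z x) + br z (br x y) = 0).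

Definition commutator (circ : A -> A -> A) : A -> A -> A :=
  fun x y => circ x y - circ y x.

Definition lie_admissible (circ : A -> A -> A) : Prop :=
  bilinear_op circ /\ lie_alg (commutator circ).

Definition transposed_poisson (mul br : A -> A -> A) : Prop :=
  com_assoc_alg mul /\ lie_alg br /\
  (forall x y z : A,
     2%:R *: mul z (br x y) = br (mul z x) y + br x (mul z y)).

Definition anti_pre_lie (circ : A -> A -> A) : Prop :=
  bilinear_op circ /\
  (forall x y z : A,
     circ x (circ y z) - circ y (circ x z) = circ (commutator circ y x) z) /\
  (forall x y z : A,
     circ (commutator circ x y) z + circ (commutator circ y z) x
     + circ (commutator circ z x) y = 0).

Definition compat_identities (mul circ : A -> A -> A) : Prop :=
  (forall x y z : A,
     2%:R *: mul (circ x y) z - 2%:R *: mul (circ y x) z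
     = mul y (circ x z) - mul x (circ y z)) /\
  (forall x y z : A,
     2%:R *: circ x (mul y z) = circ (mul z x) y + mul z (circ x y)).

Definition anti_pre_lie_poisson (mul circ : A -> A -> A) : Prop :=
  com_assoc_alg mul /\ anti_pre_lie circ /\ compat_identities mul circ.

End Defs.

(* Main.v *)
Require Import Defs.
From HB Require Import structures.
From mathcomp Require Import all_boot all_order all_algebra.
Import GRing.Theory.
Local Open Scope ring_scope.

Section Helpers.
Variables (F : fieldType) (A : lmodType F) (op : A -> A -> A).
Hypothesis Hb : bilinear_op op.

Lemma opDl x y z : op (x + y) z = op x z + op y z.
Proof. by have := Hb.1 1 x y z; rewrite !scale1r. Qed.
Lemma opDr x y z : op x (y + z) = op x y + op x z.
Proof. by have := Hb.2 1 x y z; rewrite !scale1r. Qed.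
Lemma opZl a x z : op (a *: x) z = a *: op x z.
Proof.
have := Hb.1 a x 0 z; rewrite addr0 => ->.
have := Hb.1 1 0 0 z; rewrite !scale1r !addr0 => h.
have h0 : op 0 z = 0 by apply: (@addrI _ (op 0 z)); rewrite addr0 -h.
by rewrite h0 addr0.
Qed.
Lemma opZr a x z : op x (a *: z) = a *: op x z.
Proof.
have := Hb.2 a x z 0; rewrite addr0 => ->.
have := Hb.2 1 x 0 0; rewrite !scale1r !addr0 => h.
have h0 : op x 0 = 0 by apply: (@addrI _ (op x 0)); rewrite addr0 -h.
by rewrite h0 addr0.
Qed.
Lemma opNl x z : op (- x) z = - op x z.
Proof. by rewrite -scaleN1r opZl scaleN1r. Qed.
Lemma opNr x z : op x (- z) = - op x z.
Proof. by rewrite -scaleN1r opZr scaleN1r. Qed.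
Lemma opBl x y z : op (x - y) z = op x z - op y z.
Proof. by rewrite opDl opNl. Qed.
Lemma opBr x y z : op x (y - z) = op x y - op x z.
Proof. by rewrite opDr opNr. Qed.
End Helpers.

Lemma lin1 (F : fieldType) (V : lmodType F) (a b Q : V) :
 2%:R *: (a - b) = 2%:R *: (a - b + Q) - a - Q + (a - b + Q - (2%:R *: Q - b)).
Proof.
rewrite !scaler_nat !mulr2n !opprD !opprK !addrA.
rewrite [RHS](ACl (1*2*4*5*((3*8)*(6*12)*(11*13)*(9*7)*(10*14)))).
by rewrite /= !subrr addNr !add0r addr0.
Qed.

Lemma part1 (F : fieldType) (A : lmodType F) (h2 : (2%:R : F) != 0)
  (mul circ : A -> A -> A) :
  com_assoc_alg mul -> lie_admissible circ -> compat_identities mul circ ->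
  transposed_poisson mul (commutator circ).
Proof.
move=> Hm Hl [H1 H2].
have [Hmb [mC mA]] := Hm.
split=> //; split; first exact: Hl.2.
move=> x y z; rewrite /commutator.
set a := mul z (circ x y); set b := mul z (circ y x).
set P := circ x (mul z y); set Q := circ y (mul z x).
have hR : circ (mul z x) y = 2%:R *: P - a.
  by rewrite /P (mC z y) H2 addrK.
have hS : circ (mul z y) x = 2%:R *: Q - b.
  by rewrite /Q (mC z x) H2 addrK.
have hPQ : P = (a - b) + Q.
  apply/eqP; rewrite -subr_eq; apply/eqP; apply: (scalerI h2).
  rewrite !scalerBr /P /Q H2 H2 (mC y x) /a /b (mC z) (mC z) H1.
  by rewrite opprD addrACA subrr add0r.
rewrite hR hS (@opBr _ _ _ Hmb) hPQ.
exact: lin1.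
Qed.

Lemma part2 (F : fieldType) (A : lmodType F) (circ : A -> A -> A) :
  anti_pre_lie circ -> lie_admissible circ.
Proof.
move=> [Hc [T1 T2]]; split=> //.
split; [split|split].
- move=> a x y z; rewrite /commutator Hc.1 Hc.2 scalerBr.
  by rewrite opprD addrACA.
- move=> a x y z; rewrite /commutator Hc.1 Hc.2 scalerBr.
  by rewrite opprD addrACA.
- by move=> x; rewrite /commutator subrr.
move=> x y z.
have E : forall u v w, commutator circ u (commutator circ v w)
   = (circ u (circ v w) - circ u (circ w v)) - circ (commutator circ v w) u.
  by move=> u v w; rewrite [in LHS]/commutator (@opBr _ _ _ Hc).
have N : forall u v w, circ (commutator circ u v) w = - circ (commutator circ v u) w.
  by move=> u v w; rewrite -(@opNl _ _ _ Hc) /commutator opprB.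
have h1 : circ x (circ y z) = - circ (commutator circ x y) z + circ y (circ x z).
  by apply/eqP; rewrite -subr_eq T1 N.
have h2 : circ y (circ z x) = - circ (commutator circ y z) x + circ z (circ y x).
  by apply/eqP; rewrite -subr_eq T1 N.
have h3 : circ z (circ x y) = - circ (commutator circ z x) y + circ x (circ z y).
  by apply/eqP; rewrite -subr_eq T1 N.
have h4 : circ (commutator circ x y) z = - (circ (commutator circ y z) x + circ (commutator circ z x) y).
  by apply/eqP; rewrite -addr_eq0 addrA T2.
rewrite !E h1 h2 h3 h4 !opprD !opprK !addrA.
rewrite [LHS](ACl ((1*5)*(2*9)*(3*8)*(11*4)*(6*13)*(7*12)*(10*14))).
by rewrite /= !subrr !addNr !add0r.
Qed.



Theorem proposition3p44 (F : fieldType) (A : vectType F)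
  (Hchar : [pchar F] =i pred0) :
  (forall mul circ : A -> A -> A,
     com_assoc_alg mul -> lie_admissible circ -> compat_identities mul circ ->
     transposed_poisson mul (commutator circ)) /\
  (forall mul circ : A -> A -> A,
     anti_pre_lie_poisson mul circ ->
     transposed_poisson mul (commutator circ)).
Proof.
have h2 : (2%:R : F) != 0 by rewrite ((pcharf0P F).1 Hchar 2).
split=> mul circ.
  exact: (@part1 F A h2).
move=> [Hm [Ha Hc]]; exact: (@part1 F A h2 _ _ Hm (@part2 F A _ Ha) Hc).
Qed.
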